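(* Let $(E,\rho)$ be a complete partial $v$-generalized metric space and let $S:E\to E$ satisfy $\rho(Su,Sw)\le\lambda\rho(u,w)$ for all $u,w\in E$, where $\lambda\in[0,1)$. Then $S$ has a unique fixed point $b\in E$, and $\rho(b,b)=0$.
   Context: Let $E$ be a nonempty set and $v\in\mathbb{N}$. $(E,\rho)$, with $\rho:E\times E\to[0,\infty)$, is a partial $v$-generalized metric space if for all $u,w,z_1,\dots,z_v\in E$: (1) $u=w$ iff $\rho(u,u)=\rho(u,w)=\rho(w,w)$; (2) $\rho(u,u)\le\rho(u,w)$; (3) $\rho(u,w)=\rho(w,u)$; (4) $\rho(u,w)\le\rho(u,z_1)+\rho(z_1,z_2)+\dots+\rho(z_{v-1},z_v)+\rho(z_v,w)-\sum_{i=1}^v\rho(z_i,z_i)$. A sequence $\{u_n\}$ in $E$ converges to $u\in E$ if $\lim_{n\to\infty}\rho(u_n,u)=\rho(u,u)$; it is Cauchy if $\lim_{n,m\to\infty}\rho(u_n,u_m)$ exists and is finite. $(E,\rho)$ is complete if for every Cauchy sequence $\{u_n\}$ there is $u\in E$ with $\lim_{n,m\to\infty}\rho(u_n,u_m)=\lim_{n\to\infty}\rho(u_n,u)=\rho(u,u)$. *)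

(* Defs.v *)
From Stdlib Require Import Reals.
Open Scope R_scope.

(* Chain sum for the v-generalized triangle inequality with points z 1, ..., z v:
   rho(u,z1) + rho(z1,z2) + ... + rho(z_{v-1},z_v) + rho(z_v,w) - sum_{i=1}^v rho(z_i,z_i). *)
Fixpoint inner_chain {E : Type} (rho : E -> E -> R) (z : nat -> E) (k : nat) : R :=
  match k with
  | O => 0
  | S k' => inner_chain rho z k' + rho (z k) (z (S k))
  end.
(* inner_chain rho z k = sum_{i=1}^{k} rho(z_i, z_{i+1})  (uses z 1 .. z (k+1)) *)

Fixpoint diag_sum {E : Type} (rho : E -> E -> R) (z : nat -> E) (k : nat) : R :=
  match k with
  | O => 0
  | S k' => diag_sum rho z k' + rho (z k) (z k)
  end.

Definition partial_v_gen_metric {E : Type} (v : nat) (rho : E -> E -> R) : Prop :=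
  (1 <= v)%nat /\
  (forall u w, 0 <= rho u w) /\
  (forall u w, u = w <-> (rho u u = rho u w /\ rho u w = rho w w)) /\
  (forall u w, rho u u <= rho u w) /\
  (forall u w, rho u w = rho w u) /\
  (forall (u w : E) (z : nat -> E),
      rho u w <= rho u (z 1%nat) + inner_chain rho z (v - 1) + rho (z v) w
                 - diag_sum rho z v).

Definition pconverges {E : Type} (rho : E -> E -> R) (u : nat -> E) (x : E) : Prop :=
  Un_cv (fun n => rho (u n) x) (rho x x).

Definition double_lim {E : Type} (rho : E -> E -> R) (u : nat -> E) (L : R) : Prop :=
  forall eps, eps > 0 -> exists N, forall n m, (n >= N)%nat -> (m >= N)%nat ->
    Rabs (rho (u n) (u m) - L) < eps.

Definition pCauchy {E : Type} (rho : E -> E -> R) (u : nat -> E) : Prop :=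
  exists L : R, double_lim rho u L.

Definition pcomplete {E : Type} (rho : E -> E -> R) : Prop :=
  forall u : nat -> E, pCauchy rho u ->
    exists x : E, double_lim rho u (rho x x) /\ pconverges rho u x.

(* Main.v *)
Require Import Defs.
From Stdlib Require Import Reals Lra Lia.
Open Scope R_scope.

Lemma inner_const {E : Type} (rho : E -> E -> R) (y : E) k :
  inner_chain rho (fun _ => y) k = INR k * rho y y.
Proof. induction k; simpl inner_chain. simpl; ring. rewrite IHk, S_INR; ring. Qed.

Lemma diag_const {E : Type} (rho : E -> E -> R) (y : E) k :
  diag_sum rho (fun _ => y) k = INR k * rho y y.
Proof. induction k; simpl diag_sum. simpl; ring. rewrite IHk, S_INR; ring. Qed.

Lemma tri {E : Type} v (rho : E -> E -> R) : partial_v_gen_metric v rho ->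
  forall u y w, rho u w <= rho u y + rho y w - rho y y.
Proof.
  intros (Hv & _ & _ & _ & _ & H) u y w.
  specialize (H u w (fun _ => y)). rewrite inner_const, diag_const in H.
  rewrite minus_INR in H by lia. simpl in H. lra.
Qed.

Lemma small0 L : (forall eps, eps > 0 -> Rabs L < eps) -> L = 0.
Proof.
  intros H. destruct (Req_dec L 0) as [|n]; auto.
  pose proof (Rabs_pos_lt L n). specialize (H (Rabs L / 2)). lra.
Qed.

Theorem mainTheorem5 (E : Type) (v : nat) (rho : E -> E -> R) (S : E -> E) (lambda : R) :
  inhabited E ->
  partial_v_gen_metric v rho ->
  pcomplete rho ->
  0 <= lambda < 1 ->
  (forall u w : E, rho (S u) (S w) <= lambda * rho u w) ->
  exists b : E, S b = b /\ rho b b = 0 /\ (forall c : E, S c = c -> c = b).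
Proof.
  intros [x0] Hm Hc Hl Hs.
  pose proof Hm as (Hv & Hpos & Heq & Hdiag & Hsym & _).
  pose proof (tri v rho Hm) as T.
  set (x := fun n => Nat.iter n S x0).
  assert (Hit : forall n k, rho (x n) (x (n+k)%nat) <= lambda ^ n * rho x0 (x k)).
  { induction n; intros k. simpl; unfold x; simpl; lra.
    change (x (Datatypes.S n)) with (S (x n)). change (x (Datatypes.S n + k)%nat) with (S (x (n+k)%nat)).
    eapply Rle_trans. apply Hs. simpl.
    specialize (IHn k). rewrite Rmult_assoc. apply Rmult_le_compat_l; lra. }
  set (d := rho x0 (x 1%nat)).
  assert (Hd : 0 <= d) by apply Hpos.
  assert (Hb : forall k, rho x0 (x k) <= rho x0 x0 + d * (1 - lambda ^ k) / (1 - lambda)).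
  { induction k. simpl. unfold x; simpl.
    replace (d * (1 - 1) / (1 - lambda)) with 0 by (field; lra). lra.
    eapply Rle_trans. apply (T _ (x k)).
    pose proof (Hit k 1%nat) as H1. replace (k+1)%nat with (Datatypes.S k) in H1 by lia.
    pose proof (Hpos (x k) (x k)).
    assert (lambda ^ k * d <= lambda ^ k * d) by lra.
    replace (rho x0 x0 + d * (1 - lambda ^ Datatypes.S k) / (1 - lambda)) with
      (rho x0 x0 + d * (1 - lambda ^ k) / (1 - lambda) + lambda ^ k * d)
      by (simpl; field; lra).
    fold d in H1. lra. }
  set (C := rho x0 x0 + d / (1 - lambda)).
  assert (HC : forall k, rho x0 (x k) <= C).
  { intros k. eapply Rle_trans. apply Hb. unfold C.
    pose proof (pow_le lambda k (proj1 Hl)).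
    assert (d * (1 - lambda ^ k) / (1 - lambda) <= d / (1-lambda)); [|lra].
    unfold Rdiv. apply Rmult_le_compat_r. left; apply Rinv_0_lt_compat; lra.
    nra. }
  assert (HC0 : 0 <= C) by (pose proof (HC 0%nat); pose proof (Hpos x0 (x 0%nat)); lra).
  assert (Hdl : double_lim rho x 0).
  { intros eps He.
    destruct (pow_lt_1_zero lambda ltac:(rewrite Rabs_pos_eq; lra) (eps / (C+1)))
      as [N HN]. apply Rdiv_lt_0_compat; lra.
    exists N. intros n m Hn Hm'.
    assert (key : forall n m, (n >= N)%nat -> (n <= m)%nat -> rho (x n) (x m) < eps).
    { clear n m Hn Hm'. intros n m Hn Hnm.
      replace m with (n + (m - n))%nat by lia.
      eapply Rle_lt_trans. apply Hit.
      specialize (HN n Hn). rewrite Rabs_pos_eq in HN by (apply pow_le; lra).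
      pose proof (HC (m-n)%nat). pose proof (pow_le lambda n (proj1 Hl)).
      apply (Rmult_lt_compat_r (C+1)) in HN; [|lra].
      unfold Rdiv in HN. rewrite Rmult_assoc, Rinv_l, Rmult_1_r in HN by lra.
      nra. }
    rewrite Rminus_0_r, Rabs_pos_eq by apply Hpos.
    destruct (Compare_dec.le_dec n m). apply key; lia. rewrite Hsym. apply key; lia. }
  destruct (Hc x (ex_intro _ 0 Hdl)) as [b [Hbl Hbc]].
  assert (Hbb : rho b b = 0).
  { apply small0. intros eps He.
    destruct (Hdl (eps/2) ltac:(lra)) as [N1 H1].
    destruct (Hbl (eps/2) ltac:(lra)) as [N2 H2].
    specialize (H1 (max N1 N2) (max N1 N2) ltac:(lia) ltac:(lia)).
    specialize (H2 (max N1 N2) (max N1 N2) ltac:(lia) ltac:(lia)).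
    rewrite Rminus_0_r in H1.
    pose proof (Rabs_triang (rho (x (max N1 N2)) (x (max N1 N2)))
       (- (rho (x (max N1 N2)) (x (max N1 N2)) - rho b b))).
    rewrite Rabs_Ropp in H. replace (rho (x (max N1 N2)) (x (max N1 N2)) +
       - (rho (x (max N1 N2)) (x (max N1 N2)) - rho b b)) with (rho b b) in H by ring.
    lra. }
  assert (HbS : rho b (S b) = 0).
  { apply small0. intros eps He. rewrite Rabs_pos_eq by apply Hpos.
    destruct (Hbc (eps/2) ltac:(lra)) as [N HN].
    pose proof (HN N ltac:(lia)) as H1. pose proof (HN (Datatypes.S N) ltac:(lia)) as H2.
    unfold R_dist in H1, H2. rewrite Hbb, Rminus_0_r, Rabs_pos_eq in H1, H2 by apply Hpos.
    change (x (Datatypes.S N)) with (S (x N)) in H2.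
    pose proof (T b (S (x N)) (S b)). pose proof (Hs (x N) b).
    pose proof (Hpos (S (x N)) (S (x N))). rewrite (Hsym b (S (x N))) in H.
    assert (lambda * rho (x N) b <= rho (x N) b) by (pose proof (Hpos (x N) b); nra).
    lra. }
  assert (HSS : rho (S b) (S b) = 0).
  { pose proof (Hdiag (S b) b). rewrite (Hsym (S b) b), HbS in H. pose proof (Hpos (S b) (S b)). lra. }
  assert (HSb : S b = b) by (symmetry; apply Heq; rewrite Hbb, HbS, HSS; auto).
  exists b. split; [exact HSb|split; auto].
  intros c Hcc.
  assert (Hcc0 : rho c c = 0).
  { pose proof (Hs c c). rewrite Hcc in H. pose proof (Hpos c c). nra. }
  assert (Hcb : rho c b = 0).
  { pose proof (Hs c b). rewrite Hcc in H. 
    rewrite HSb in H.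
    pose proof (Hpos c b). nra. }
  apply Heq. rewrite Hcc0, Hcb, Hbb. auto.
Qed.
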